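(* Let $n\ge 1$, let $\Delta := (\sqrt{n+1})^{n+1}$, and let $X=\{x_1,\ldots,x_v\}\subseteq\{0,1\}^n$ be non-empty. Let $A\in\mathbb{Z}^{f\times n}$, $b\in\mathbb{Z}^f$ with all entries of absolute value at most $\Delta$ be such that $\{x\in\mathbb{R}^n\mid Ax\le b\}=\operatorname{conv}(X)$ is a non-redundant description, and let $S\in\mathbb{R}^{f\times v}$ be the slack matrix, $S_{ij}=b_i-A_ix_j$ (so $S_{ij}\in\{0,1,\ldots,(n+1)\Delta\}$). Let $S=UV$ with $U\in\mathbb{R}_{\ge0}^{f\times r}$, $V\in\mathbb{R}_{\ge 0}^{r\times v}$ be a normalized non-negative factorization, i.e. $\|U^\ell\|_\infty=\|V_\ell\|_\infty$ for every $\ell=1,\ldots,r$. Then $\|U\|_\infty\le\Delta$ and $\|V\|_\infty\le\Delta$.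
   Context: $A_i$ denotes the $i$-th row of a matrix $A$ and $A^i$ its $i$-th column; for a matrix or vector, $\|\cdot\|_\infty$ denotes the maximum absolute value of an entry. So $U^\ell$ is the $\ell$-th column of $U$ and $V_\ell$ the $\ell$-th row of $V$. *)

(* Defs.v *)
From HB Require Import structures.
From mathcomp Require Import all_boot all_order all_algebra.
From mathcomp Require Import reals.
Set Implicit Arguments. Unset Strict Implicit. Unset Printing Implicit Defensive.
Import Order.TTheory GRing.Theory Num.Theory.
Local Open Scope ring_scope.

Definition Delta (R : realType) (n : nat) : R := Num.sqrt (n.+1)%:R ^+ n.+1.

Definition mx_inf_norm (R : realType) m p (M : 'M[R]_(m, p)) : R :=
  \big[Num.max/0]_(i < m) \big[Num.max/0]_(j < p) `|M i j|.

Definition in_conv (R : realType) n v (X : 'M[R]_(n, v)) (x : 'cV[R]_n) : Prop :=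
  exists lam : 'I_v -> R,
    (forall j, 0 <= lam j) /\ \sum_j lam j = 1 /\
    forall k, x k ord0 = \sum_j lam j * X k j.

Definition ineq_holds (R : realType) f n (A : 'M[int]_(f, n)) (b : 'cV[int]_f)
    (i : 'I_f) (x : 'cV[R]_n) : Prop :=
  \sum_k (A i k)%:~R * x k ord0 <= (b i ord0)%:~R.

Definition slack (R : realType) f n v (A : 'M[int]_(f, n)) (b : 'cV[int]_f)
    (X : 'M[R]_(n, v)) : 'M[R]_(f, v) :=
  \matrix_(i, j) ((b i ord0)%:~R - \sum_k (A i k)%:~R * X k j).

(* Main.v *)
Require Import Defs.
From HB Require Import structures.
From mathcomp Require Import all_boot all_order all_algebra.
From mathcomp Require Import reals.
From mathcomp Require Import lra.
Import Order.TTheory GRing.Theory Num.Theory.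
Local Open Scope ring_scope.

Lemma norm_ind (R : realType) (P : R -> Prop) m p (M : 'M[R]_(m, p)) :
  P 0 -> (forall i j, P `|M i j|) -> P (mx_inf_norm M).
Proof.
move=> P0 PM; rewrite /mx_inf_norm.
have Hmax : forall x y : R, P x -> P y -> P (Num.max x y).
  by move=> x y Px Py; case: (leP x y).
apply: big_ind => // i _; apply: big_ind => //.
Qed.

Lemma sq_le (R : realType) (x y : R) : 0 <= x -> 0 <= y -> x * x <= y * y -> x <= y.
Proof. move=> *; nra. Qed.

Lemma entry_le (R : realType) m p (M : 'M[R]_(m, p)) i j :
  `|M i j| <= mx_inf_norm M.
Proof.
rewrite /mx_inf_norm (bigD1 i) //= (bigD1 j) //=.
by rewrite le_max; apply/orP; left; rewrite le_max lexx.
Qed.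

Lemma Delta_ge (R : realType) n : (1 <= n)%N -> (n.+1)%:R <= Delta R n.
Proof.
case: n => [//|m] _; rewrite /Delta.
set s := Num.sqrt _.
have s1 : 1 <= s by rewrite -sqrtr1 ler_sqrt // ler1n.
have -> : s ^+ m.+2 = s ^+ 2 * s ^+ m by rewrite -exprD.
rewrite sqr_sqrtr // ler_peMr //; exact: exprn_ege1.
Qed.

Theorem lemma2 (R : realType) (n v f r : nat)
  (X : 'M[R]_(n, v)) (A : 'M[int]_(f, n)) (b : 'cV[int]_f)
  (U : 'M[R]_(f, r)) (V : 'M[R]_(r, v)) :
  (1 <= n)%N ->
  (* X = {x_1,...,x_v} is a non-empty set of 0/1 points (columns of X) *)
  (0 < v)%N ->
  (forall k j, X k j = 0 \/ X k j = 1) ->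
  injective (fun j : 'I_v => col j X) ->
  (* entries of A and b bounded by Delta in absolute value *)
  (forall i k, `|(A i k)%:~R| <= Delta R n) ->
  (forall i, `|(b i ord0)%:~R| <= Delta R n) ->
  (* {x | Ax <= b} = conv(X) *)
  (forall x : 'cV[R]_n, (forall i, ineq_holds A b i x) <-> in_conv X x) ->
  (* non-redundancy: dropping any inequality changes the set *)
  (forall i, exists x : 'cV[R]_n,
      (forall i', i' != i -> ineq_holds A b i' x) /\ ~ ineq_holds A b i x) ->
  (* normalized non-negative factorization S = U V *)
  (forall i l, 0 <= U i l) -> (forall l j, 0 <= V l j) ->
  slack A b X = U *m V ->
  (forall l, mx_inf_norm (col l U) = mx_inf_norm (row l V)) ->
  mx_inf_norm U <= Delta R n /\ mx_inf_norm V <= Delta R n.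
Proof.
move=> n1 _ X01 _ HA Hb _ _ U0 V0 HS Hn.
set D := Delta R n.
have D0 : 0 <= D by rewrite /D /Delta exprn_ge0 // sqrtr_ge0.
have Dn := @Delta_ge R n n1.
rewrite -/D in HA Hb Dn.
have HSb : forall i j, slack A b X i j <= D * D.
  move=> i j; rewrite mxE.
  have h1 : `|\sum_k (A i k)%:~R * X k j| <= D *+ n.
    apply: le_trans (ler_norm_sum _ _ _) _.
    rewrite -[n in D *+ n]card_ord -sumr_const; apply: ler_sum => k _.
    rewrite normrM; case: (X01 k j) => ->; rewrite ?normr0 ?normr1 ?mulr0 ?mulr1 //.
  have h2 := Hb i.
  have h3 : (b i ord0)%:~R - \sum_k (A i k)%:~R * X k j <= D * (n.+1)%:R.
    rewrite mulr_natr mulrS.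
    have := ler_norm ((b i ord0)%:~R : R).
    have := ler_norm (- \sum_k (A i k)%:~R * X k j : R); rewrite normrN.
    move: h1 h2. lra.
  apply: le_trans h3 _; rewrite ler_wpM2l //.
have Hprod : forall i l j, U i l * V l j <= D * D.
  move=> i l j; apply: le_trans (HSb i j); rewrite HS mxE (bigD1 l) //=.
  rewrite lerDl; apply: sumr_ge0 => k _; exact: mulr_ge0.
split.
  apply: (@norm_ind R (fun x => x <= D) _ _ _) => // i l; rewrite ger0_norm //.
  have hr : U i l * mx_inf_norm (row l V) <= D * D.
    apply: (@norm_ind R (fun x => U i l * x <= D * D) _ _ _).
      by rewrite mulr0 mulr_ge0.
    by move=> a j; rewrite mxE ger0_norm.
  have hc : U i l <= mx_inf_norm (col l U).
    by have := @entry_le R _ _ (col l U) i ord0; rewrite mxE ger0_norm.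
  rewrite Hn in hc.
  have hu := U0 i l.
  apply: sq_le => //.
  apply: le_trans hr; exact: ler_wpM2l.
apply: (@norm_ind R (fun x => x <= D) _ _ _) => // l j; rewrite ger0_norm //.
have hr : V l j * mx_inf_norm (col l U) <= D * D.
  apply: (@norm_ind R (fun x => V l j * x <= D * D) _ _ _).
    by rewrite mulr0 mulr_ge0.
  by move=> i a; rewrite mxE ger0_norm // mulrC.
have hc : V l j <= mx_inf_norm (row l V).
  by have := @entry_le R _ _ (row l V) ord0 j; rewrite mxE ger0_norm.
rewrite -Hn in hc.
have hu := V0 l j.
apply: sq_le => //.
apply: le_trans hr; exact: ler_wpM2l.
Qed.
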